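(* Let $\mu$ be a monotone system over $\{0,1\}^V$, $\theta\in(0,1)$, $T_1,T_2\ge1$. Let $\pi^{(t)}_{\mathrm{alg}}$ be the law of $X^{(t)}_{\mathrm{alg}}$ (generated by $\mathcal A_\mu(\theta,T_1,T_2)$) and $\pi^{(t)}_{\mathrm{GD}}$ the law of $X^{(t)}_{\pi\text{-GD}}$, the Glauber dynamics on $\pi$ started from $X^{(0)}_{\pi\text{-GD}}=\mathsf{lift}(\mathbf 1_V)$. Then for every $t\ge0$ (with $t\le T_1T_2$), $\pi^{(t)}_{\mathrm{GD}}\preceq_{\mathrm{sd}}\pi^{(t)}_{\mathrm{alg}}$.
   Context: Monotone system: for every $v$ and all feasible $\sigma\preceq\tau$ in $\{0,1\}^{V\setminus\{v\}}$ (coordinatewise order), $\mu^\sigma_v(1)\le\mu^\tau_v(1)$. Tilted $(\theta*\mu)(\sigma)\propto\mu(\sigma)\theta^{\|\sigma\|_1}$. $\mathsf{lift}$: random map $\{0,1\}^V\to\{0,1,\star\}^V$, independently per coordinate $0\mapsto0$, $1\mapsto\star$ w.p. $1-\theta$, $1\mapsto1$ w.p. $\theta$. $\mathsf{contr}$: $0\mapsto0$, $1,\star\mapsto1$. $\pi$ is the law of $\mathsf{lift}(X)$ for $X\sim\mu$. Glauber dynamics on $\pi$: pick $v$ uniformly, resample $X_v\in\{0,1,\star\}$ from $\pi$ conditioned on $X_{V\setminus\{v\}}$. On $\{0,1,\star\}^V$ use the order $0<1<\star$ and the coordinatewise partial order; $\nu\preceq_{\mathrm{sd}}\nu'$ means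 there is a coupling $(X,Y)$ with $X\sim\nu$, $Y\sim\nu'$, $X\preceq Y$ a.s. Algorithm $\mathcal A_\mu(\theta,T_1,T_2)$: set $X=\mathsf{lift}(\mathbf 1_V)$; repeat $T_1$ times: (a) $X\gets\mathsf{contr}(X)$; (b) $X\gets\mathsf{lift}(X)$, $S=\{v:X_v\ne\star\}$; (c) repeat $T_2$ times: pick $v$ uniformly; if $v\in S$ resample $X_v\sim(\theta*\mu)_v^{\sigma_{V\setminus\{v\}}}$ with $\sigma=\mathsf{contr}(X)$, else keep $X_v=\star$. $X^{(0)}_{\mathrm{alg}}=\mathsf{lift}(\mathbf 1_V)$, $X^{(t)}_{\mathrm{alg}}$ the state after the $t$-th single-site step of (c). *)

(* Defs.v *)
From mathcomp Require Import all_boot all_order all_algebra.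
Set Implicit Arguments. Unset Strict Implicit. Unset Printing Implicit Defensive.
Import Order.TTheory GRing.Theory Num.Theory.
Local Open Scope ring_scope.

(* Spins of the lifted space {0,1,*}: encoded as 'I_3 with
   0 = spin 0, 1 = spin 1, 2 = spin star.  The nat order on 'I_3 is
   exactly the order 0 < 1 < star used in the paper. *)
Definition spin3 := 'I_3.
Definition s0 : spin3 := @Ordinal 3 0 isT.
Definition s1 : spin3 := @Ordinal 3 1 isT.
Definition sstar : spin3 := @Ordinal 3 2 isT.

Section Defs.
Variable R : realFieldType.
Variable V : finType.

Notation conf := {ffun V -> bool}.
Notation conf3 := {ffun V -> spin3}.

Definition upd (A : Type) (x : {ffun V -> A}) (v : V) (a : A) : {ffun V -> A} :=
  [ffun u => if u == v then a else x u].

Definition is_distr (T : finType) (p : {ffun T -> R}) : Prop :=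
  (forall x, 0 <= p x) /\ \sum_x p x = 1.

(* conditional law of the spin at v given the other spins of x
   (the value x v is ignored):  p^{x_{V\{v}}}_v (a) *)
Definition cond (A : finType) (p : {ffun {ffun V -> A} -> R}) (x : {ffun V -> A})
    (v : V) (a : A) : R :=
  p (upd x v a) / \sum_(c : A) p (upd x v c).

Definition feasible (A : finType) (p : {ffun {ffun V -> A} -> R}) (x : {ffun V -> A})
    (v : V) : Prop :=
  0 < \sum_(c : A) p (upd x v c).

Definition monotone_system (mu : {ffun conf -> R}) : Prop :=
  forall (v : V) (s t : conf),
    (forall u, u != v -> s u ==> t u) ->
    feasible mu s v -> feasible mu t v ->
    cond mu s v true <= cond mu t v true.

Definition ones : conf := [ffun _ => true].

Definition norm1 (s : conf) : nat := #|[set v | s v]|.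

Definition tilt (theta : R) (mu : {ffun conf -> R}) : {ffun conf -> R} :=
  [ffun s => mu s * theta ^+ norm1 s / \sum_(s' : conf) mu s' * theta ^+ norm1 s'].

(* single-coordinate lift probabilities: P(lift(b) = a) *)
Definition lift1 (theta : R) (b : bool) (a : spin3) : R :=
  if b then (if a == s1 then theta else if a == sstar then 1 - theta else 0)
  else (a == s0)%:R.

Definition liftP (theta : R) (x : conf) (y : conf3) : R :=
  \prod_v lift1 theta (x v) (y v).

Definition contr (y : conf3) : conf := [ffun v => y v != s0].

Definition piL (theta : R) (mu : {ffun conf -> R}) : {ffun conf3 -> R} :=
  [ffun y => \sum_(x : conf) mu x * liftP theta x y].

Definition step (T : finType) (p : {ffun T -> R}) (K : T -> T -> R) : {ffun T -> R} :=
  [ffun y => \sum_x p x * K x y].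

Definition law_lift_ones (theta : R) : {ffun conf3 -> R} :=
  [ffun y => liftP theta ones y].

Definition K_GD (theta : R) (mu : {ffun conf -> R}) (x y : conf3) : R :=
  #|V|%:R^-1 * \sum_v ((y == upd x v (y v))%:R * cond (piL theta mu) x v (y v)).

Fixpoint law_GD (theta : R) (mu : {ffun conf -> R}) (t : nat) : {ffun conf3 -> R} :=
  match t with
  | 0 => law_lift_ones theta
  | t'.+1 => step (law_GD theta mu t') (K_GD theta mu)
  end.

(* Single-site step (c) of the algorithm.  S = {v : X_v != star} is the set
   of non-star sites; it is invariant during step (c), so it is read off the
   current state. *)
Definition K_alg (theta : R) (mu : {ffun conf -> R}) (x y : conf3) : R :=
  #|V|%:R^-1 * \sum_v ((y == upd x v (y v))%:R *
     (if x v == sstar then (y v == sstar)%:R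
      else if y v == sstar then 0
      else cond (tilt theta mu) (contr x) v (y v != s0))).

(* steps (a)+(b): X <- lift(contr(X)) *)
Definition K_contr_lift (theta : R) (x y : conf3) : R := liftP theta (contr x) y.

(* law of X^{(t)}_alg, the state after the t-th single-site step of (c)
   in A_mu(theta, T1, T2); a new round (contr then lift) starts before
   single-site steps number k*T2 + 1. Meaningful for t <= T1*T2. *)
Fixpoint law_alg (theta : R) (mu : {ffun conf -> R}) (T2 t : nat) : {ffun conf3 -> R} :=
  match t with
  | 0 => law_lift_ones theta
  | t'.+1 =>
      let p := law_alg theta mu T2 t' in
      step (if (T2 %| t')%N then step p (K_contr_lift theta) else p) (K_alg theta mu)
  end.

Definition le3 (x y : conf3) : bool := [forall v, (x v <= y v)%N].

Definition sd (p q : {ffun conf3 -> R}) : Prop :=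
  exists c : {ffun conf3 * conf3 -> R},
    [/\ forall z, 0 <= c z,
        forall x, \sum_y c (x, y) = p x,
        forall y, \sum_x c (x, y) = q y &
        forall x y, c (x, y) != 0 -> le3 x y].

End Defs.

(* Main.v *)
Require Import Defs.
From mathcomp Require Import all_boot all_order all_algebra.
Import Order.TTheory GRing.Theory Num.Theory.
Local Open Scope ring_scope.
From mathcomp Require Import ring lra.
From Stdlib Require Import ClassicalEpsilon.
Set Implicit Arguments. Unset Strict Implicit. Unset Printing Implicit Defensive.
Import Order.TTheory GRing.Theory Num.Theory.
Local Open Scope ring_scope.

Section Gen.
Variable R : realFieldType.
Variable V : finType.
Local Notation conf3 := {ffun V -> spin3}.
Implicit Types p q : {ffun conf3 -> R}.

Lemma le3_refl (x : conf3) : le3 x x.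
Proof. by apply/forallP=> v. Qed.

Lemma le3_trans (x y z : conf3) : le3 x y -> le3 y z -> le3 x z.
Proof.
move=> /forallP H1 /forallP H2; apply/forallP=> v.
exact: leq_trans (H1 v) (H2 v).
Qed.

Lemma coupling_ge0r q (c : {ffun conf3 * conf3 -> R}) :
  (forall z, 0 <= c z) -> (forall y, \sum_x c (x, y) = q y) -> forall y, 0 <= q y.
Proof. by move=> c0 cq y; rewrite -cq; apply: sumr_ge0. Qed.

Lemma coupling_ge0l p (c : {ffun conf3 * conf3 -> R}) :
  (forall z, 0 <= c z) -> (forall x, \sum_y c (x, y) = p x) -> forall x, 0 <= p x.
Proof. by move=> c0 cp x; rewrite -cp; apply: sumr_ge0. Qed.

Lemma coupling_le (c : {ffun conf3 * conf3 -> R}) (x y : conf3) :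
  (forall z, 0 <= c z) -> c (x, y) <= \sum_y' c (x, y').
Proof.
move=> c0; rewrite (bigD1 y) //= lerDl; apply: sumr_ge0 => *; exact: c0.
Qed.

Lemma coupling_le' (c : {ffun conf3 * conf3 -> R}) (x y : conf3) :
  (forall z, 0 <= c z) -> c (x, y) <= \sum_x' c (x', y).
Proof.
move=> c0; rewrite (bigD1 x) //= lerDl; apply: sumr_ge0 => *; exact: c0.
Qed.

Lemma sum_neq0 (I : finType) (F : I -> R) :
  \sum_i F i != 0 -> exists i, F i != 0.
Proof.
move=> H; apply/existsP; apply: contraNT H => /existsPn H'.
by rewrite big1 // => i _; apply/eqP/negPn/H'.
Qed.

Lemma sd_refl p : (forall x, 0 <= p x) -> sd p p.
Proof.
move=> p0; exists [ffun z => (z.1 == z.2)%:R * p z.1]; split.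
- by move=> [x y]; rewrite ffunE mulr_ge0 ?ler0n.
- move=> x; rewrite (bigD1 x) //= ffunE eqxx mul1r big1 ?addr0 // => y /negbTE.
  by rewrite ffunE /= eq_sym => ->; rewrite mul0r.
- move=> y; rewrite (bigD1 y) //= ffunE eqxx mul1r big1 ?addr0 // => x /negbTE.
  by rewrite ffunE /= => ->; rewrite mul0r.
- move=> x y; rewrite ffunE /=; case: (eqVneq x y) => [->|_]; first by rewrite le3_refl.
  by rewrite mul0r eqxx.
Qed.

Lemma sd_trans p q r : sd p q -> sd q r -> sd p r.
Proof.
move=> [c1 [c10 c1p c1q c1le]] [c2 [c20 c2q c2r c2le]].
have q0 := coupling_ge0r c10 c1q.
have c1z x y : q y = 0 -> c1 (x, y) = 0.
  move=> qy; apply/eqP; rewrite eq_le c10 andbT -qy -c1q.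
  exact: coupling_le' c10.
exists [ffun z => \sum_y c1 (z.1, y) * c2 (y, z.2) / q y]; split.
- move=> [x z]; rewrite ffunE sumr_ge0 // => y _.
  by rewrite divr_ge0 ?mulr_ge0.
- move=> x; under eq_bigr do rewrite ffunE /=.
  rewrite exchange_big /= -c1p; apply: eq_bigr => y _.
  under eq_bigr do rewrite mulrAC.
  rewrite -mulr_sumr c2q.
  have [qy|qn0] := eqVneq (q y) 0; first by rewrite c1z ?mul0r.
  by rewrite -mulrA mulVf // mulr1.
- move=> z; under eq_bigr do rewrite ffunE /=.
  rewrite exchange_big /= -c2r; apply: eq_bigr => y _.
  rewrite -!mulr_suml c1q.
  have [qy|qn0] := eqVneq (q y) 0.
    rewrite qy invr0 mulr0; apply/esym/eqP; rewrite eq_le c20 andbT -qy -c2q.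
    exact: coupling_le c20.
  by rewrite mulrAC mulfV // mul1r.
- move=> x z; rewrite ffunE /= => ne.
  have [y ny] := sum_neq0 ne.
  move: ny; rewrite !mulf_eq0 !negb_or => /andP[/andP[n1 n2] _].
  exact: le3_trans (c1le _ _ n1) (c2le _ _ n2).
Qed.

Lemma sd_sum (I : finType) (P Q : I -> {ffun conf3 -> R}) :
  (forall i, sd (P i) (Q i)) ->
  sd [ffun z => \sum_i P i z] [ffun z => \sum_i Q i z].
Proof.
move=> H.
have [C HC] := ClassicalEpsilon.choice
  (fun i (c : {ffun conf3 * conf3 -> R}) =>
     [/\ forall z, 0 <= c z,
        forall x, \sum_y c (x, y) = P i x,
        forall y, \sum_x c (x, y) = Q i y &
        forall x y, c (x, y) != 0 -> le3 x y]) H.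
exists [ffun z => \sum_i C i z]; split.
- by move=> z; rewrite ffunE sumr_ge0 // => i _; case: (HC i).
- move=> x; rewrite ffunE; under eq_bigr do rewrite ffunE.
  by rewrite exchange_big; apply: eq_bigr => i _; case: (HC i).
- move=> y; rewrite ffunE; under eq_bigr do rewrite ffunE.
  by rewrite exchange_big; apply: eq_bigr => i _; case: (HC i).
- move=> x y; rewrite ffunE => ne.
  have [i ni] := sum_neq0 ne.
  by case: (HC i) => _ _ _; apply.
Qed.

Lemma sd_step p q (K K' : conf3 -> conf3 -> R) :
  sd p q ->
  (forall x y, le3 x y -> 0 < p x -> 0 < q y ->
     sd [ffun z => K x z] [ffun z => K' y z]) ->
  sd (step p K) (step q K').
Proof.
move=> [c [c0 cp cq cle]] H.
have H' : forall xy : conf3 * conf3, exists g : {ffun conf3 * conf3 -> R},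
   c xy != 0 ->
     [/\ forall z, 0 <= g z,
        forall x, \sum_y g (x, y) = K xy.1 x,
        forall y, \sum_x g (x, y) = K' xy.2 y &
        forall x y, g (x, y) != 0 -> le3 x y].
  move=> [x y]; have [cz|nz] := eqVneq (c (x, y)) 0.
    by exists 0.
  have cpos : 0 < c (x, y) by rewrite lt_def nz c0.
  have px : 0 < p x by rewrite -cp; exact: lt_le_trans cpos (coupling_le x y c0).
  have qy : 0 < q y by rewrite -cq; exact: lt_le_trans cpos (coupling_le' x y c0).
  have [g [g0 g1 g2 g3]] := H x y (cle _ _ nz) px qy.
  exists g => _; split => //.
  - by move=> z; rewrite g1 ffunE.
  - by move=> z; rewrite g2 ffunE.
have [G HG] := ClassicalEpsilon.choice _ H'.
have Gz xy : c xy = 0 \/ c xy != 0 by case: eqVneq; [left|right].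
exists [ffun zz => \sum_xy c xy * G xy zz]; split.
- move=> zz; rewrite ffunE sumr_ge0 // => xy _.
  have [->|nz] := eqVneq (c xy) 0; first by rewrite mul0r.
  by case: (HG xy nz) => g0 _ _ _; rewrite mulr_ge0.
- move=> z; rewrite [step _ _ _]ffunE; under eq_bigr do rewrite ffunE.
  rewrite exchange_big /=.
  transitivity (\sum_(xy : conf3 * conf3) c (xy.1, xy.2) * K xy.1 z).
    apply: eq_bigr => -[x y] _; rewrite -mulr_sumr /=.
    have [->|nz] := eqVneq (c (x, y)) 0; first by rewrite !mul0r.
    by case: (HG (x, y) nz) => _ -> _ _.
  rewrite -(pair_bigA _ (fun x y => c (x, y) * K x z)) /=.
  by apply: eq_bigr => x _; rewrite -mulr_suml cp.
- move=> z; rewrite [step _ _ _]ffunE; under eq_bigr do rewrite ffunE.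
  rewrite exchange_big /=.
  transitivity (\sum_(xy : conf3 * conf3) c (xy.1, xy.2) * K' xy.2 z).
    apply: eq_bigr => -[x y] _; rewrite -mulr_sumr /=.
    have [->|nz] := eqVneq (c (x, y)) 0; first by rewrite !mul0r.
    by case: (HG (x, y) nz) => _ _ -> _.
  rewrite -(pair_bigA _ (fun x y => c (x, y) * K' y z)) /= exchange_big.
  by apply: eq_bigr => y _; rewrite -mulr_suml cq.
- move=> z z'; rewrite ffunE => ne.
  have [xy ni] := sum_neq0 ne.
  move: ni; rewrite mulf_eq0 negb_or => /andP[n1 n2].
  by case: (HG xy n1) => _ _ _; apply.
Qed.


Lemma spin3P (a : spin3) : [\/ a = s0, a = s1 | a = sstar].
Proof.
case: a => [[|[|[|n]]] Hn].
- by constructor 1; apply: val_inj.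
- by constructor 2; apply: val_inj.
- by constructor 3; apply: val_inj.
- by [].
Qed.

Lemma sum3 (F : spin3 -> R) : \sum_a F a = F s0 + F s1 + F sstar.
Proof.
rewrite !big_ord_recr big_ord0 /= add0r.
by congr (F _ + F _ + F _); apply: val_inj.
Qed.

Lemma chain3 (al be : {ffun spin3 -> R}) :
  (forall a, 0 <= al a) -> (forall b, 0 <= be b) ->
  \sum_a al a = \sum_b be b ->
  al sstar <= be sstar -> al s1 + al sstar <= be s1 + be sstar ->
  exists g : {ffun spin3 * spin3 -> R},
    [/\ forall z, 0 <= g z,
        forall a, \sum_b g (a, b) = al a,
        forall b, \sum_a g (a, b) = be b &
        forall a b, g (a, b) != 0 -> (a <= b)%N].
Proof.
move=> a0 b0; rewrite !sum3 => hs h2 h1.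
have [m [m1 m2 m3]] : exists m, [/\ m <= al s1, m <= be s1 &
                                   m = al s1 \/ m = be s1].
  case: (lerP (al s1) (be s1)) => h.
  - by exists (al s1); split => //; left.
  - by exists (be s1); split => //; [exact: ltW| right].
pose tbl (a b : spin3) :=
  if a == s0 then (if b == s0 then be s0 else if b == s1 then be s1 - m
                   else al s0 - be s0 - be s1 + m)
  else if a == s1 then (if b == s0 then 0 else if b == s1 then m else al s1 - m)
  else (if b == sstar then al sstar else 0).
have A0 := a0 s0; have A1 := a0 s1; have A2 := a0 sstar.
have B0 := b0 s0; have B1 := b0 s1; have B2 := b0 sstar.
exists [ffun ab => tbl ab.1 ab.2]; split.
- move=> [a b]; rewrite ffunE /= /tbl.
  case: (spin3P a) => ->; case: (spin3P b) => -> /=; try lra.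
- move=> a; rewrite sum3 !ffunE /= /tbl.
  by case: (spin3P a) => -> /=; lra.
- move=> b; rewrite sum3 !ffunE /= /tbl.
  by case: (spin3P b) => -> /=; lra.
- move=> a b; rewrite ffunE /= /tbl.
  by case: (spin3P a) => ->; case: (spin3P b) => -> //=; rewrite eqxx.
Qed.

Lemma updE (A : Type) (x : {ffun V -> A}) v a u :
  upd x v a u = if u == v then a else x u.
Proof. by rewrite ffunE. Qed.

Lemma upd_at (A : Type) (x : {ffun V -> A}) v a : upd x v a v = a.
Proof. by rewrite updE eqxx. Qed.

Lemma upd_upd (A : Type) (x : {ffun V -> A}) v a b : upd (upd x v a) v b = upd x v b.
Proof. by apply/ffunP => u; rewrite !updE; case: eqP. Qed.

Lemma upd_id (A : Type) (x : {ffun V -> A}) v : upd x v (x v) = x.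
Proof. by apply/ffunP => u; rewrite !updE; case: eqP => // ->. Qed.

Lemma sum_upd (y : conf3) v (F : conf3 -> R) :
  \sum_(z : conf3) (z == upd y v (z v))%:R * F z = \sum_b F (upd y v b).
Proof.
transitivity (\sum_b \sum_z (z == upd y v b)%:R * F z); last first.
  apply: eq_bigr => b _; rewrite (bigD1 (upd y v b)) //= eqxx mul1r big1 ?addr0 //.
  by move=> z /negbTE ->; rewrite mul0r.
rewrite exchange_big; apply: eq_bigr => z _; rewrite -mulr_suml.
congr (_ * _); rewrite (bigD1 (z v)) //= big1 ?addr0 // => b nb.
case: eqP => // zE; move: nb; rewrite zE upd_at eqxx //.
Qed.

Lemma sd_site (x y : conf3) v (al be : {ffun spin3 -> R}) :
  (forall u, u != v -> (x u <= y u)%N) ->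
  (exists g : {ffun spin3 * spin3 -> R},
    [/\ forall z, 0 <= g z,
        forall a, \sum_b g (a, b) = al a,
        forall b, \sum_a g (a, b) = be b &
        forall a b, g (a, b) != 0 -> (a <= b)%N]) ->
  sd [ffun z : conf3 => (z == upd x v (z v))%:R * al (z v)]
     [ffun z : conf3 => (z == upd y v (z v))%:R * be (z v)].
Proof.
move=> hxy [g [g0 g1 g2 g3]].
exists [ffun zz : conf3 * conf3 => (zz.1 == upd x v (zz.1 v))%:R * (zz.2 == upd y v (zz.2 v))%:R
                  * g (zz.1 v, zz.2 v)]; split.
- by move=> zz; rewrite ffunE !mulr_ge0 ?ler0n.
- move=> z; rewrite ffunE; under eq_bigr do rewrite ffunE /= -mulrA.
  by rewrite -mulr_sumr sum_upd; under eq_bigr do rewrite upd_at; rewrite g1.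
- move=> z; rewrite ffunE; under eq_bigr do rewrite ffunE /= mulrAC.
  by rewrite -mulr_suml sum_upd; under eq_bigr do rewrite upd_at; rewrite g2 mulrC.
- move=> z z'; rewrite ffunE /= !mulf_eq0 !negb_or => /andP[/andP[h1 h2] h3].
  have h1' : z = upd x v (z v) by move: h1; have [//|_] := eqVneq z (upd x v (z v)); rewrite eqxx.
  have h2' : z' = upd y v (z' v) by move: h2; have [//|_] := eqVneq z' (upd y v (z' v)); rewrite eqxx.
  apply/forallP => u; rewrite h1' h2' !updE.
  by case: eqP => [_|/eqP]; [exact: g3 | exact: hxy].
Qed.

Lemma sd_scale (p q : {ffun conf3 -> R}) k : 0 <= k -> sd p q ->
  sd [ffun z => k * p z] [ffun z => k * q z].
Proof.
move=> k0 [c [c0 cp cq cle]].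
exists [ffun zz => k * c zz]; split.
- by move=> z; rewrite ffunE mulr_ge0.
- by move=> x; rewrite ffunE -cp mulr_sumr; apply: eq_bigr => y _; rewrite ffunE.
- by move=> y; rewrite ffunE -cq mulr_sumr; apply: eq_bigr => x _; rewrite ffunE.
- by move=> x y; rewrite ffunE mulf_eq0 negb_or => /andP[_]; apply: cle.
Qed.

Lemma sd_ext (p p' q q' : {ffun conf3 -> R}) : p = p' -> q = q' -> sd p q -> sd p' q'.
Proof. by move=> -> ->. Qed.

Lemma upd_sym (A : eqType) (x z : {ffun V -> A}) v :
  (z == upd x v (z v)) = (x == upd z v (x v)).
Proof.
apply/eqP/eqP => H; apply/ffunP => u; rewrite updE; case: (eqVneq u v) => [->//|ne].
- by rewrite H updE (negbTE ne).
- by rewrite H updE (negbTE ne).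
Qed.

Lemma sum_upd2 (z : conf3) v (G : conf3 -> R) :
  \sum_(x : conf3) (z == upd x v (z v))%:R * G x = \sum_a G (upd z v a).
Proof. under eq_bigr do rewrite upd_sym; exact: sum_upd. Qed.

Lemma cond_upd (A : finType) (p : {ffun {ffun V -> A} -> R}) x v a b :
  cond p (upd x v a) v b = cond p x v b.
Proof.
rewrite /cond upd_upd; congr (_ / _); apply: eq_bigr => c _; by rewrite upd_upd.
Qed.

Lemma sd_fiber v (p q : {ffun conf3 -> R}) :
  (forall w : conf3, exists g : {ffun spin3 * spin3 -> R},
    [/\ forall z, 0 <= g z,
        forall a, \sum_b g (a, b) = [ffun a => p (upd w v a)] a,
        forall b, \sum_a g (a, b) = [ffun b => q (upd w v b)] b &
        forall a b, g (a, b) != 0 -> (a <= b)%N]) ->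
  sd p q.
Proof.
move=> H; have [G HG] := ClassicalEpsilon.choice _ H.
exists [ffun zz : conf3 * conf3 => (zz.2 == upd zz.1 v (zz.2 v))%:R *
                  G (upd zz.1 v s0) (zz.1 v, zz.2 v)]; split.
- by move=> [z z']; rewrite ffunE mulr_ge0 ?ler0n //; case: (HG (upd z v s0)).
- move=> z; under eq_bigr do rewrite ffunE /=.
  rewrite sum_upd; under eq_bigr do rewrite upd_at.
  by case: (HG (upd z v s0)) => _ -> _ _; rewrite ffunE upd_upd upd_id.
- move=> z'; under eq_bigr do rewrite ffunE /= upd_sym.
  rewrite sum_upd; under eq_bigr do rewrite upd_at upd_upd.
  by case: (HG (upd z' v s0)) => _ _ -> _; rewrite ffunE upd_upd upd_id.
- move=> z z'; rewrite ffunE /= mulf_eq0 negb_or => /andP[h1 h2].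
  have h1' : z' = upd z v (z' v).
    by move: h1; have [//|_] := eqVneq z' (upd z v (z' v)); rewrite eqxx.
  apply/forallP => u; rewrite h1' updE; case: (eqVneq u v) => [->|_ //].
  by move: h2; case: (HG (upd z v s0)) => _ _ _; apply.
Qed.

Lemma step_sumE (p : {ffun conf3 -> R}) k (F : V -> conf3 -> conf3 -> R) :
  step p (fun x z => k * \sum_v F v x z) =
  [ffun z => \sum_v [ffun z => k * step p (F v) z] z].
Proof.
apply/ffunP => z; rewrite !ffunE.
under eq_bigr do rewrite !mulr_sumr.
rewrite exchange_big; apply: eq_bigr => v _; rewrite !ffunE mulr_sumr.
by apply: eq_bigr => x _; rewrite mulrCA.
Qed.

Lemma ker_sumE k (F : V -> conf3 -> conf3 -> R) (x : conf3) :
  [ffun z => k * \sum_v F v x z] = [ffun z => \sum_v [ffun z => k * F v x z] z].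
Proof.
by apply/ffunP => z; rewrite !ffunE mulr_sumr; apply: eq_bigr => v _; rewrite ffunE.
Qed.


Lemma ffun_eta (f : {ffun conf3 -> R}) : [ffun z => f z] = f.
Proof. by apply/ffunP => z; rewrite ffunE. Qed.

Lemma sd_avg (P Q : V -> conf3 -> R) :
  (forall v, sd [ffun z => P v z] [ffun z => Q v z]) ->
  sd [ffun z => #|V|%:R^-1 * \sum_v P v z] [ffun z => #|V|%:R^-1 * \sum_v Q v z].
Proof.
move=> H.
have E (F : V -> conf3 -> R) : [ffun z => #|V|%:R^-1 * \sum_v F v z] =
    [ffun z => \sum_v [ffun z => #|V|%:R^-1 * [ffun z => F v z] z] z].
  by apply/ffunP => z; rewrite !ffunE mulr_sumr; apply: eq_bigr => v _; rewrite !ffunE.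
rewrite !E; apply: sd_sum => v; apply: sd_scale => //.
by rewrite invr_ge0 ler0n.
Qed.

Lemma step_avgE (p : {ffun conf3 -> R}) (F : V -> conf3 -> conf3 -> R) :
  step p (fun x z => #|V|%:R^-1 * \sum_v F v x z) =
  [ffun z => #|V|%:R^-1 * \sum_v step p (F v) z].
Proof.
apply/ffunP => z; rewrite !ffunE.
under eq_bigr do rewrite mulrCA.
rewrite -mulr_sumr; congr (_ * _).
under eq_bigr do rewrite mulr_sumr.
rewrite exchange_big; apply: eq_bigr => v _; by rewrite ffunE.
Qed.


Lemma core4 (X0 X1 Y0 Y1 a0 a1 b0 b1 : R) :
  0 <= X0 -> 0 <= X1 -> 0 <= Y0 -> 0 <= Y1 ->
  0 <= a0 -> 0 <= a1 -> 0 <= b0 -> 0 <= b1 ->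
  (X1 = 0 -> a1 = 0) -> (Y0 = 0 -> b0 = 0) ->
  a0 * Y0 <= b0 * X0 -> a0 * Y1 <= b1 * X0 -> a1 * Y1 <= b1 * X1 ->
  a0 * X1 <= a1 * X0 -> b0 * Y1 <= b1 * Y0 -> X1 * Y0 <= X0 * Y1 ->
  (a0 + a1) * (Y0 + Y1) <= (b0 + b1) * (X0 + X1).
Proof.
move=> hX0 hX1 hY0 hY1 ha0 ha1 hb0 hb1 zX1 zY0 c00 c01 c11 cx cy m.
have [eX1|nX1] := eqVneq X1 0.
  by move: (zX1 eX1) c00 c01 => ->; rewrite eX1; nra.
have [eY0|nY0] := eqVneq Y0 0.
  by move: (zY0 eY0) c01 c11 => ->; rewrite eY0; nra.
have pX1 : 0 < X1 by rewrite lt0r nX1.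
have pY0 : 0 < Y0 by rewrite lt0r nY0.
have pX0Y1 : 0 < X0 * Y1 by apply: lt_le_trans m; rewrite mulr_gt0.
have pX0 : 0 < X0 by rewrite lt0r; apply/andP; split => //; apply: contraTneq pX0Y1 => ->; rewrite mul0r ltxx.
have pY1 : 0 < Y1 by rewrite lt0r; apply/andP; split => //; apply: contraTneq pX0Y1 => ->; rewrite mulr0 ltxx.
set r0 := a0 / X0; set r1 := a1 / X1; set s0 := b0 / Y0; set s1 := b1 / Y1.
have ea0 : a0 = r0 * X0 by rewrite /r0 divfK // lt0r_neq0.
have ea1 : a1 = r1 * X1 by rewrite /r1 divfK // lt0r_neq0.
have eb0 : b0 = s0 * Y0 by rewrite /s0 divfK // lt0r_neq0.
have eb1 : b1 = s1 * Y1 by rewrite /s1 divfK // lt0r_neq0.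
rewrite ea0 ea1 eb0 eb1 in c00 c01 c11 cx cy *.
have dv (u w k : R) : 0 < k -> u * k <= w * k -> u <= w by move=> k0; rewrite ler_pM2r.
have h00 : r0 <= s0.
  by apply: (dv _ _ (X0 * Y0)); rewrite ?mulr_gt0 //; move: c00; rewrite -!mulrA [Y0 * X0]mulrC.
have h01 : r0 <= s1.
  by apply: (dv _ _ (X0 * Y1)); rewrite ?mulr_gt0 //; move: c01; rewrite -!mulrA [Y1 * X0]mulrC.
have h11 : r1 <= s1.
  by apply: (dv _ _ (X1 * Y1)); rewrite ?mulr_gt0 //; move: c11; rewrite -!mulrA [Y1 * X1]mulrC.
have hx : r0 <= r1.
  by apply: (dv _ _ (X0 * X1)); rewrite ?mulr_gt0 //; move: cx; rewrite -!mulrA [X1 * X0]mulrC.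
have hy : s0 <= s1.
  by apply: (dv _ _ (Y0 * Y1)); rewrite ?mulr_gt0 //; move: cy; rewrite -!mulrA [Y1 * Y0]mulrC.
have d00 : 0 <= s0 - r0 by rewrite subr_ge0.
have d11 : 0 <= s1 - r1 by rewrite subr_ge0.
have d01 : 0 <= s1 - r0 by rewrite subr_ge0.
have dm : 0 <= X0 * Y1 - X1 * Y0 by rewrite subr_ge0.
have t1 : 0 <= X0 * Y0 * (s0 - r0) by do 2 apply: mulr_ge0 => //.
have t2 : 0 <= X1 * Y1 * (s1 - r1) by do 2 apply: mulr_ge0 => //.
have t3 : 0 <= (X0 * Y1 - X1 * Y0) * (s1 - r0) by apply: mulr_ge0.
have t4 : 0 <= X1 * Y0 * ((s1 - r1) + (s0 - r0)).
  by apply: mulr_ge0; [apply: mulr_ge0|apply: addr_ge0].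
rewrite -subr_ge0.
have -> : (s0 * Y0 + s1 * Y1) * (X0 + X1) - (r0 * X0 + r1 * X1) * (Y0 + Y1) =
  X0 * Y0 * (s0 - r0) + X1 * Y1 * (s1 - r1) + (X0 * Y1 - X1 * Y0) * (s1 - r0)
  + X1 * Y0 * ((s1 - r1) + (s0 - r0)) by ring.
by rewrite !addr_ge0.
Qed.

End Gen.

Section Main.
Variable R : realFieldType.
Variable V : finType.
Local Notation conf := {ffun V -> bool}.
Local Notation conf3 := {ffun V -> spin3}.
Variable th : R.
Hypothesis th0 : 0 < th.
Hypothesis th1 : th < 1.
Variable mu : {ffun conf -> R}.
Hypothesis mu0 : forall s, 0 <= mu s.
Hypothesis mones : 0 < mu (ones V).
Hypothesis mono : monotone_system mu.
Local Notation pi := (piL th mu).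

Lemma lift1_ge0 b a : 0 <= lift1 th b a.
Proof.
by case: b; case: (spin3P a) => -> /=; rewrite /lift1 /= ?ler0n //; have := th0; have := th1; lra.
Qed.

Lemma lift1_pos a : 0 < lift1 th (a != s0) a.
Proof. by case: (spin3P a) => -> /=; rewrite /lift1 /= ?ltr01 //; have := th0; have := th1; lra. Qed.

Lemma lift1_neq0 b a : lift1 th b a != 0 -> b = (a != s0).
Proof.
by case: b; case: (spin3P a) => -> //=; rewrite /lift1 /= eqxx.
Qed.

Lemma sum_lift1 b : \sum_a lift1 th b a = 1.
Proof. by rewrite sum3; case: b; rewrite /lift1 /=; ring. Qed.

Lemma liftP_ge0 (s : conf) (y : conf3) : 0 <= liftP th s y.
Proof. by apply: prodr_ge0 => v _; exact: lift1_ge0. Qed.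

Lemma liftP_pos (y : conf3) : 0 < liftP th (contr y) y.
Proof. by apply: prodr_gt0 => v _; rewrite ffunE; exact: lift1_pos. Qed.

Lemma liftP_neq0 (s : conf) (y : conf3) : liftP th s y != 0 -> s = contr y.
Proof.
move=> H; apply/ffunP => v; rewrite ffunE; apply: lift1_neq0.
by move: H; rewrite /liftP (bigD1 v) //= mulf_eq0 negb_or => /andP[].
Qed.

Lemma sum_liftP (s : conf) : \sum_y liftP th s y = 1.
Proof.
rewrite /liftP.
have := bigA_distr_bigA (fun v a => lift1 th (s v) a) => /= <-.
by rewrite big1 // => v _; rewrite sum_lift1.
Qed.

Lemma liftP_split (s : conf) (y : conf3) v :
  liftP th s y = lift1 th (s v) (y v) * \prod_(u | u != v) lift1 th (s u) (y u).
Proof. by rewrite /liftP (bigD1 v). Qed.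

Lemma contr_upd (y : conf3) v a : contr (upd y v a) = upd (contr y) v (a != s0).
Proof. by apply/ffunP => u; rewrite !ffunE; case: (eqVneq u v). Qed.

Lemma liftP_upd (s : conf) (y : conf3) v b a :
  liftP th (upd s v b) (upd y v a) = lift1 th b a * \prod_(u | u != v) lift1 th (s u) (y u).
Proof.
rewrite (liftP_split _ _ v) !upd_at; congr (_ * _); apply: eq_bigr => u /negbTE uv.
by rewrite !updE uv.
Qed.

Lemma lift_chain b b' : b ==> b' ->
  exists g : {ffun spin3 * spin3 -> R},
    [/\ forall z, 0 <= g z,
        forall a, \sum_c g (a, c) = [ffun a => lift1 th b a] a,
        forall c, \sum_a g (a, c) = [ffun a => lift1 th b' a] c &
        forall a c, g (a, c) != 0 -> (a <= c)%N].
Proof.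
move=> hb; apply: chain3.
- by move=> a; rewrite ffunE lift1_ge0.
- by move=> a; rewrite ffunE lift1_ge0.
- by under eq_bigr do rewrite ffunE; under [RHS]eq_bigr do rewrite ffunE; rewrite !sum_lift1.
- by rewrite !ffunE; case: b hb; case: b' => //= _; rewrite /lift1 /= ?ler0n //; have := th0; have := th1; lra.
- by rewrite !ffunE; case: b hb; case: b' => //= _; rewrite /lift1 /= ?ler0n //; have := th0; have := th1; lra.
Qed.

Lemma sd_lift (s s' : conf) : (forall v, s v ==> s' v) ->
  sd [ffun z => liftP th s z] [ffun z => liftP th s' z].
Proof.
move=> H.
have [G HG] := ClassicalEpsilon.choice _ (fun v => lift_chain (H v)).
exists [ffun zz : conf3 * conf3 => \prod_v G v (zz.1 v, zz.2 v)]; split.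
- by move=> zz; rewrite ffunE prodr_ge0 // => v _; case: (HG v).
- move=> z; rewrite ffunE; under eq_bigr do rewrite ffunE /=.
  have := bigA_distr_bigA (fun v c => G v (z v, c)) => /= <-.
  by apply: eq_bigr => v _; case: (HG v) => _ -> _ _; rewrite ffunE.
- move=> z; rewrite ffunE; under eq_bigr do rewrite ffunE /=.
  have := bigA_distr_bigA (fun v a => G v (a, z v)) => /= <-.
  by apply: eq_bigr => v _; case: (HG v) => _ _ -> _; rewrite ffunE.
- move=> z z'; rewrite ffunE /= => H'; apply/forallP => v.
  case: (HG v) => _ _ _; apply.
  by move: H'; rewrite (bigD1 v) //= mulf_eq0 negb_or => /andP[].
Qed.

Lemma piE (y : conf3) : pi y = mu (contr y) * liftP th (contr y) y.
Proof.
rewrite ffunE (bigD1 (contr y)) //= big1 ?addr0 // => s ns.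
rewrite (_ : liftP th s y = 0) ?mulr0 //; apply/eqP.
by apply: contraNT ns => /liftP_neq0 ->.
Qed.

Lemma pi_ge0 y : 0 <= pi y.
Proof. by rewrite piE mulr_ge0 // liftP_ge0 //; have := th0; have := th1; lra. Qed.

Lemma pi_eq0 y : (pi y == 0) = (mu (contr y) == 0).
Proof.
rewrite piE mulf_eq0; have := liftP_pos y; rewrite lt0r => /andP[/negbTE -> _].
by rewrite orbF.
Qed.

Definition Cz (z : conf3) v := \prod_(u | u != v) lift1 th (contr z u) (z u).

Lemma Cz_pos z v : 0 < Cz z v.
Proof.
by apply: prodr_gt0 => u _; rewrite ffunE; apply: lift1_pos.
Qed.

Definition mb (z : conf3) v b := mu (upd (contr z) v b).

Lemma pi_upd z v a : pi (upd z v a) = mb z v (a != s0) * lift1 th (a != s0) a * Cz z v.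
Proof. by rewrite piE contr_upd liftP_upd mulrA. Qed.

Lemma pi_upd0 z v : pi (upd z v s0) = mb z v false * Cz z v.
Proof. by rewrite pi_upd /lift1 /= mulr1. Qed.
Lemma pi_upd1 z v : pi (upd z v s1) = mb z v true * th * Cz z v.
Proof. by rewrite pi_upd /lift1 /=. Qed.
Lemma pi_upd2 z v : pi (upd z v sstar) = mb z v true * (1 - th) * Cz z v.
Proof. by rewrite pi_upd /lift1 /=. Qed.

Lemma sum_pi_upd z v :
  \sum_a pi (upd z v a) = (mb z v false + mb z v true) * Cz z v.
Proof. rewrite sum3 pi_upd0 pi_upd1 pi_upd2; ring. Qed.

Lemma condpiE z v a : cond pi z v a =
  lift1 th (a != s0) a * mb z v (a != s0) / (mb z v false + mb z v true).
Proof.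
rewrite /cond sum_pi_upd pi_upd.
have C0 := Cz_pos z v.
have [->|ne] := eqVneq (mb z v false + mb z v true) 0.
  by rewrite mul0r !invr0 !mulr0.
by field; rewrite ne /= lt0r_neq0.
Qed.

Lemma condmuE (s : conf) v :
  cond mu s v true = mu (upd s v true) / (mu (upd s v false) + mu (upd s v true)).
Proof. by rewrite /cond big_bool /= addrC. Qed.

Lemma norm1_upd (s : conf) v :
  norm1 (upd s v true) = (norm1 (upd s v false)).+1.
Proof.
rewrite /norm1.
have -> : [set u | upd s v true u] = v |: [set u | upd s v false u].
  by apply/setP => u; rewrite !inE !updE; case: eqP.
by rewrite cardsU1 inE upd_at.
Qed.

Lemma Z_pos : 0 < \sum_(s' : conf) mu s' * th ^+ norm1 s'.
Proof.
rewrite (bigD1 (ones V)) //=; apply: ltr_pwDl.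
  by rewrite mulr_gt0 // exprn_gt0.
by apply: sumr_ge0 => s _; rewrite mulr_ge0 // exprn_ge0 // ltW.
Qed.

Lemma tilt_upd (s : conf) v b : tilt th mu (upd s v b) =
  (if b then th else 1) * mu (upd s v b) *
  (th ^+ norm1 (upd s v false) / \sum_(s' : conf) mu s' * th ^+ norm1 s').
Proof.
rewrite ffunE; case: b => /=; rewrite ?norm1_upd ?exprS; ring.
Qed.

Lemma condtiltE (s : conf) v b : cond (tilt th mu) s v b =
  (if b then th else 1) * mu (upd s v b) / (mu (upd s v false) + th * mu (upd s v true)).
Proof.
rewrite /cond big_bool !tilt_upd /=.
set K := (th ^+ _ / _).
have K0 : 0 < K by apply: divr_gt0; [apply: exprn_gt0 | apply: Z_pos].
have -> : th * mu (upd s v true) * K + 1 * mu (upd s v false) * K =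
          (mu (upd s v false) + th * mu (upd s v true)) * K by ring.
have [->|ne] := eqVneq (mu (upd s v false) + th * mu (upd s v true)) 0.
  by rewrite mul0r !invr0 !mulr0.
by field; rewrite ne /= lt0r_neq0.
Qed.



Lemma le3_contr (x y : conf3) u : le3 x y -> contr x u ==> contr y u.
Proof.
move/forallP/(_ u); rewrite !ffunE.
by case: (spin3P (x u)) => ->; case: (spin3P (y u)) => ->.
Qed.

Lemma le3_upd (x y : conf3) v (a b : spin3) : le3 x y -> (a <= b)%N -> le3 (upd x v a) (upd y v b).
Proof.
move=> /forallP H ab; apply/forallP => u; rewrite !updE; case: eqP => // _; exact: H.
Qed.

Lemma pi_upd_id x v : pi x = mb x v (x v != s0) * lift1 th (x v != s0) (x v) * Cz x v.
Proof. by rewrite -{1}(upd_id x v) pi_upd. Qed.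

Lemma mb_ge0 x v b : 0 <= mb x v b.
Proof. exact: mu0. Qed.

Lemma mpos x v : 0 < pi x -> 0 < mb x v false + mb x v true.
Proof.
move=> px; have h : 0 < mb x v (x v != s0).
  rewrite lt0r mb_ge0 andbT; apply: contraTneq px => e.
  by rewrite (pi_upd_id x v) e !mul0r ltxx.
have := mb_ge0 x v false; have := mb_ge0 x v true.
by case: (x v != s0) h => h; lra.
Qed.

Lemma cond_mu_mono x y v : le3 x y -> 0 < pi x -> 0 < pi y ->
  cond mu (contr x) v true <= cond mu (contr y) v true.
Proof.
move=> hxy px py; apply: mono.
- by move=> u _; exact: le3_contr.
- by rewrite /feasible big_bool /= addrC; have := mpos v px; rewrite /mb.
- by rewrite /feasible big_bool /= addrC; have := mpos v py; rewrite /mb.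
Qed.

Lemma condpi1 x v : cond pi x v s1 = th * cond mu (contr x) v true.
Proof. by rewrite condpiE condmuE /lift1 /= /mb mulrA. Qed.
Lemma condpi2 x v : cond pi x v sstar = (1 - th) * cond mu (contr x) v true.
Proof. by rewrite condpiE condmuE /lift1 /= /mb mulrA. Qed.

Lemma condpi_ge0 x v a : 0 <= cond pi x v a.
Proof.
rewrite condpiE divr_ge0 // ?addr_ge0 ?mb_ge0 // mulr_ge0 ?mb_ge0 //.
exact: lift1_ge0.
Qed.

Lemma sum_condpi x v : 0 < pi x -> \sum_a cond pi x v a = 1.
Proof.
move=> px; have := mpos v px => m.
rewrite sum3 !condpiE /lift1 /=; field.
by rewrite lt0r_neq0.
Qed.

Lemma GD_chain x y v : le3 x y -> 0 < pi x -> 0 < pi y ->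
  exists g : {ffun spin3 * spin3 -> R},
    [/\ forall z, 0 <= g z,
        forall a, \sum_b g (a, b) = [ffun a => cond pi x v a] a,
        forall b, \sum_a g (a, b) = [ffun a => cond pi y v a] b &
        forall a b, g (a, b) != 0 -> (a <= b)%N].
Proof.
move=> hxy px py; have hc := cond_mu_mono v hxy px py.
apply: chain3.
- by move=> a; rewrite ffunE condpi_ge0.
- by move=> a; rewrite ffunE condpi_ge0.
- by under eq_bigr do rewrite ffunE; under [RHS]eq_bigr do rewrite ffunE;
    rewrite !sum_condpi.
- rewrite !ffunE !condpi2; apply: ler_wpM2l => //; have := th1; lra.
- rewrite !ffunE !condpi1 !condpi2 -!mulrDl addrC subrK.
  by rewrite !mul1r.
Qed.

Lemma GD_mono x y : le3 x y -> 0 < pi x -> 0 < pi y ->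
  sd [ffun z => K_GD th mu x z] [ffun z => K_GD th mu y z].
Proof.
move=> hxy px py; apply: sd_avg => v.
have hu : forall u, u != v -> (x u <= y u)%N by move=> u _; move/forallP: hxy; apply.
have H := sd_site hu (GD_chain v hxy px py).
by apply: sd_ext H; apply/ffunP => z; rewrite !ffunE.
Qed.


Definition Gk v (x z : conf3) := (z == upd x v (z v))%:R * cond pi x v (z v).
Definition Aval (x : conf3) v (b : spin3) :=
  if x v == sstar then (b == sstar)%:R
  else if b == sstar then 0 else cond (tilt th mu) (contr x) v (b != s0).
Definition Ak v (x z : conf3) := (z == upd x v (z v))%:R * Aval x v (z v).

Lemma stepG q v z : step q (Gk v) z = (\sum_a q (upd z v a)) * cond pi z v (z v).
Proof.
rewrite ffunE; under eq_bigr do rewrite /Gk mulrCA.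
rewrite sum_upd2 mulr_suml; apply: eq_bigr => a _; by rewrite cond_upd.
Qed.

Lemma stepA q v z : step q (Ak v) z =
  if z v == sstar then q z
  else (q (upd z v s0) + q (upd z v s1)) * cond (tilt th mu) (contr z) v (z v != s0).
Proof.
rewrite ffunE; under eq_bigr do rewrite /Ak mulrCA.
rewrite sum_upd2 sum3 /Aval !upd_at /= !contr_upd !cond_upd.
case: (spin3P (z v)) => e; rewrite e /= ?mulr0 ?mulr1 ?add0r ?addr0; [by rewrite mulrDl|by rewrite mulrDl|by rewrite -e upd_id].
Qed.

Lemma tiltE (z : conf3) v : z v != sstar ->
  cond (tilt th mu) (contr z) v (z v != s0) = pi z / (pi (upd z v s0) + pi (upd z v s1)).
Proof.
move=> zs; rewrite condtiltE (pi_upd_id z v) pi_upd0 pi_upd1.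
rewrite -/(mb z v false) -/(mb z v true) -/(mb z v (z v != s0)).
have C0 := Cz_pos z v.
set m0 := mb z v false; set m1 := mb z v true; set C := Cz z v.
have -> : m0 * C + m1 * th * C = (m0 + th * m1) * C by ring.
have [->|ne] := eqVneq (m0 + th * m1) 0; first by rewrite !mul0r !invr0 !mulr0.
have Cn : C != 0 by rewrite lt0r_neq0.
case: (spin3P (z v)) zs => -> //= _; rewrite /lift1 /=; by field; rewrite ne Cn.
Qed.


Definition InvQ (q : {ffun conf3 -> R}) :=
  [/\ forall x, 0 <= q x, forall x, pi x = 0 -> q x = 0 &
      forall x y, le3 x y -> q x * pi y <= q y * pi x].

Lemma alg_chain q v w : InvQ q ->
  exists g : {ffun spin3 * spin3 -> R},
    [/\ forall z, 0 <= g z,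
        forall a, \sum_b g (a, b) = [ffun a => step q (Gk v) (upd w v a)] a,
        forall b, \sum_a g (a, b) = [ffun b => step q (Ak v) (upd w v b)] b &
        forall a b, g (a, b) != 0 -> (a <= b)%N].
Proof.
case=> q0 qpi qcm.
set Q0 := q (upd w v s0); set Q1 := q (upd w v s1); set Q2 := q (upd w v sstar).
have eG a : step q (Gk v) (upd w v a) = (Q0 + Q1 + Q2) * cond pi w v a.
  by rewrite stepG upd_at cond_upd sum3 !upd_upd.
have eA b : step q (Ak v) (upd w v b) =
    if b == sstar then Q2 else (Q0 + Q1) * cond (tilt th mu) (contr w) v (b != s0).
  rewrite stepA upd_at contr_upd cond_upd !upd_upd.
  by case: (spin3P b) => ->.
rewrite -/(mb w v false) -/(mb w v true) in eA.
have C0 := Cz_pos w v.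
set m0 := mb w v false in eA eG *; set m1 := mb w v true in eA eG *.
set C := Cz w v in C0.
have hQ0 := q0 (upd w v s0); have hQ1 := q0 (upd w v s1); have hQ2 := q0 (upd w v sstar).
have hm0 : 0 <= m0 by exact: mb_ge0.
have hm1 : 0 <= m1 by exact: mb_ge0.
have hI : (Q0 + Q1) * (m1 * (1 - th)) <= Q2 * (m0 + th * m1).
  have h0 := qcm _ _ (le3_upd v (le3_refl w) (isT : (s0 <= sstar)%N)).
  have h1 := qcm _ _ (le3_upd v (le3_refl w) (isT : (s1 <= sstar)%N)).
  rewrite pi_upd0 pi_upd1 pi_upd2 -/m0 -/m1 -/C in h0 h1.
  rewrite -(ler_pM2r C0); move: h0 h1; rewrite -/Q0 -/Q1 -/Q2; nra.
have hz : m0 + m1 = 0 -> [/\ Q0 = 0, Q1 = 0 & Q2 = 0].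
  move=> e; have e0 : m0 = 0 by lra.
  have e1 : m1 = 0 by lra.
  split; apply: qpi; by rewrite ?pi_upd0 ?pi_upd1 ?pi_upd2 -/m0 -/m1 ?e0 ?e1 !mul0r.
have -> : [ffun a => step q (Gk v) (upd w v a)] =
          [ffun a => (Q0 + Q1 + Q2) * cond pi w v a].
  by apply/ffunP => a; rewrite ffunE [RHS]ffunE; exact: eG.
have -> : [ffun b => step q (Ak v) (upd w v b)] =
          [ffun b => if b == sstar then Q2
                     else (Q0 + Q1) * cond (tilt th mu) (contr w) v (b != s0)].
  by apply/ffunP => a; rewrite ffunE [RHS]ffunE; exact: eA.
apply: chain3 => [a|b|||].
all: rewrite ?sum3 ?ffunE ?condpiE ?condtiltE /= -/(mb w v false) -/(mb w v true) -/m0 -/m1.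
- by rewrite mulr_ge0 ?addr_ge0 ?divr_ge0 ?mulr_ge0 ?addr_ge0 ?mb_ge0 ?lift1_ge0.
- case: (b == sstar) => //; rewrite mulr_ge0 ?addr_ge0 // divr_ge0 ?mulr_ge0 ?mb_ge0 //.
    by case: (b != s0) => //; exact: ltW.
  by rewrite addr_ge0 // mulr_ge0 // ltW.
- have [e|ne] := eqVneq (m0 + m1) 0.
    by case: (hz e) => -> -> ->; rewrite !add0r !mul0r.
  have ne' : m0 + th * m1 != 0.
    rewrite lt0r_neq0 //; have : 0 < m0 + m1 by rewrite lt0r ne addr_ge0.
    by have := th0; have := th1; nra.
  by field; rewrite ne ne'.
- have [e|ne] := eqVneq (m0 + m1) 0.
    by case: (hz e) => -> -> ->; rewrite !add0r !mul0r.
  rewrite -subr_ge0.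
  have -> : Q2 - (Q0 + Q1 + Q2) * ((1 - th) * m1 / (m0 + m1)) =
    (Q2 * (m0 + th * m1) - (Q0 + Q1) * (m1 * (1 - th))) / (m0 + m1).
    by field.
  by rewrite divr_ge0 ?subr_ge0 // addr_ge0.
- have [e|ne] := eqVneq (m0 + m1) 0.
    by case: (hz e) => -> -> ->; rewrite !add0r !mul0r !add0r.
  have ne' : m0 + th * m1 != 0.
    rewrite lt0r_neq0 //; have : 0 < m0 + m1 by rewrite lt0r ne addr_ge0.
    by have := th0; have := th1; nra.
  rewrite -subr_ge0.
  have -> : (Q0 + Q1) * (th * m1 / (m0 + th * m1)) + Q2 -
    ((Q0 + Q1 + Q2) * (th * m1 / (m0 + m1)) + (Q0 + Q1 + Q2) * ((1 - th) * m1 / (m0 + m1))) =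
    m0 * (Q2 * (m0 + th * m1) - (Q0 + Q1) * (m1 * (1 - th))) / ((m0 + m1) * (m0 + th * m1)).
    by field; rewrite ne ne'.
  rewrite divr_ge0 ?mulr_ge0 ?subr_ge0 ?addr_ge0 //.
  by rewrite mulr_ge0 // ltW.
Qed.


Lemma GD_alg q : InvQ q -> sd (step q (K_GD th mu)) (step q (K_alg th mu)).
Proof.
move=> hq.
have -> : step q (K_GD th mu) = step q (fun x z => #|V|%:R^-1 * \sum_v Gk v x z) by [].
have -> : step q (K_alg th mu) = step q (fun x z => #|V|%:R^-1 * \sum_v Ak v x z) by [].
rewrite !step_avgE; apply: sd_avg => v; rewrite !ffun_eta.
apply: (@sd_fiber _ _ v (step q (Gk v)) (step q (Ak v))). move=> w; exact: alg_chain.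
Qed.

Lemma InvQ_avg (F : V -> {ffun conf3 -> R}) : (forall v, InvQ (F v)) ->
  InvQ [ffun z => #|V|%:R^-1 * \sum_v F v z].
Proof.
move=> H; have k0 : 0 <= #|V|%:R^-1 :> R by rewrite invr_ge0 ler0n.
split.
- by move=> x; rewrite ffunE mulr_ge0 // sumr_ge0 // => v _; case: (H v).
- by move=> x px; rewrite ffunE big1 ?mulr0 // => v _; case: (H v) => _ ->.
- move=> x y hxy; rewrite !ffunE -!mulrA ler_wpM2l //.
  rewrite !mulr_suml; apply: ler_sum => v _; case: (H v) => _ _ h; by move: (h _ _ hxy); rewrite !ffunE.
Qed.

Lemma condtilt_ge0 (s : conf) v b : 0 <= cond (tilt th mu) s v b.
Proof.
rewrite condtiltE; apply: divr_ge0.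
  by apply: mulr_ge0 => //; case: b => //; exact: ltW.
by apply: addr_ge0 => //; apply: mulr_ge0 => //; exact: ltW.
Qed.

Lemma InvQ_A q v : InvQ q -> InvQ (step q (Ak v)).
Proof.
case=> q0 qpi qcm; split.
- move=> z; rewrite stepA; case: (z v == sstar) => //.
  by rewrite mulr_ge0 ?addr_ge0 ?condtilt_ge0.
- move=> z pz; rewrite stepA; case: eqP => [_|/eqP zs]; first exact: qpi.
  by rewrite tiltE // pz mul0r mulr0.
- move=> x y hxy; rewrite !stepA.
  have hvx := forallP hxy v.
  case: (eqVneq (y v) sstar) => ys; case: (eqVneq (x v) sstar) => xs.
  + exact: qcm.
  + rewrite tiltE //.
    set Sx := pi (upd x v s0) + pi (upd x v s1).
    have h0 : q (upd x v s0) * pi y <= q y * pi (upd x v s0).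
      by apply: qcm; rewrite -(upd_id y v) le3_upd // ys.
    have h1 : q (upd x v s1) * pi y <= q y * pi (upd x v s1).
      by apply: qcm; rewrite -(upd_id y v) le3_upd // ys.
    have [e|ne] := eqVneq Sx 0.
      by rewrite e invr0 mulr0 mulr0 mul0r mulr_ge0 // pi_ge0.
    have Sx0 : 0 < Sx by rewrite lt0r ne addr_ge0 // pi_ge0.
    rewrite -subr_ge0.
    have -> : q y * pi x - (q (upd x v s0) + q (upd x v s1)) * (pi x / Sx) * pi y =
      (q y * Sx - (q (upd x v s0) + q (upd x v s1)) * pi y) * (pi x / Sx).
      by field.
    apply: mulr_ge0; last by apply: divr_ge0; [exact: pi_ge0 | exact: ltW].
    rewrite subr_ge0 /Sx; lra.
  + by move: hvx; rewrite xs; case: (spin3P (y v)) ys => ->.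
  + rewrite !tiltE //.
    set X0 := pi (upd x v s0); set X1 := pi (upd x v s1).
    set Y0 := pi (upd y v s0); set Y1 := pi (upd y v s1).
    have [px|px] := eqVneq (pi x) 0; first by rewrite px !mul0r mulr0 !mul0r mulr0.
    have [py|py] := eqVneq (pi y) 0; first by rewrite py mulr0 mul0r !mulr0 mul0r.
    have px' : 0 < pi x by rewrite lt0r px pi_ge0.
    have py' : 0 < pi y by rewrite lt0r py pi_ge0.
    have ex : pi x = if x v == s0 then X0 else X1.
      by rewrite -{1}(upd_id x v); case: (spin3P (x v)) xs => ->.
    have ey : pi y = if y v == s0 then Y0 else Y1.
      by rewrite -{1}(upd_id y v); case: (spin3P (y v)) ys => ->.
    have hX0 : 0 <= X0 := pi_ge0 _.
    have hX1 : 0 <= X1 := pi_ge0 _.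
    have hY0 : 0 <= Y0 := pi_ge0 _.
    have hY1 : 0 <= Y1 := pi_ge0 _.
    have Sx0 : 0 < X0 + X1.
      by move: px'; rewrite ex; case: (x v == s0) => h; lra.
    have Sy0 : 0 < Y0 + Y1.
      by move: py'; rewrite ey; case: (y v == s0) => h; lra.
    have key : (q (upd x v s0) + q (upd x v s1)) * (Y0 + Y1) <=
               (q (upd y v s0) + q (upd y v s1)) * (X0 + X1).
      apply: core4 => //; rewrite ?q0 //.
      - by move=> e; apply: qpi.
      - by move=> e; apply: qpi.
      - by apply: qcm; apply: le3_upd.
      - by apply: qcm; apply: le3_upd.
      - by apply: qcm; apply: le3_upd.
      - by apply: qcm; apply: le3_upd; rewrite ?le3_refl.
      - by apply: qcm; apply: le3_upd; rewrite ?le3_refl.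
      - have hm := cond_mu_mono v hxy px' py'.
        rewrite !condmuE in hm.
        have mx := mpos v px'; have my := mpos v py'.
        rewrite /mb in mx my.
        rewrite /X0 /X1 /Y0 /Y1 !pi_upd0 !pi_upd1 /mb.
        have Cx := Cz_pos x v; have Cy := Cz_pos y v.
        move: hm; rewrite ler_pdivrMr // mulrAC ler_pdivlMr //.
        set a := mu (upd (contr x) v false); set b := mu (upd (contr x) v true).
        set c := mu (upd (contr y) v false); set d := mu (upd (contr y) v true).
        move=> hm.
        have hm' : b * c <= a * d by nra.
        have : 0 <= th * (Cz x v * Cz y v) by rewrite !mulr_ge0 // ltW.
        nra.
    set A := q (upd x v s0) + q (upd x v s1) in key *.
    set B := q (upd y v s0) + q (upd y v s1) in key *.
    rewrite -subr_ge0.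
    have -> : B * (pi y / (Y0 + Y1)) * pi x - A * (pi x / (X0 + X1)) * pi y =
      (B * (X0 + X1) - A * (Y0 + Y1)) * (pi x * pi y / ((X0 + X1) * (Y0 + Y1))).
      by field; rewrite !lt0r_neq0.
    by rewrite mulr_ge0 ?subr_ge0 // divr_ge0 ?mulr_ge0 ?pi_ge0 ?addr_ge0.
Qed.


Lemma InvQ_alg q : InvQ q -> InvQ (step q (K_alg th mu)).
Proof.
move=> hq.
have -> : step q (K_alg th mu) = step q (fun x z => #|V|%:R^-1 * \sum_v Ak v x z) by [].
rewrite step_avgE; apply: InvQ_avg => v; exact: InvQ_A.
Qed.

Definition LF (p : {ffun conf3 -> R}) := exists F : conf -> R,
  [/\ forall s, 0 <= F s, forall s, mu s = 0 -> F s = 0 &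
      forall y, p y = liftP th (contr y) y * F (contr y)].

Lemma liftP_contr_split (z : conf3) v :
  liftP th (contr z) z = lift1 th (z v != s0) (z v) * Cz z v.
Proof. by rewrite (liftP_split _ _ v) ffunE. Qed.

Lemma mb_id (z : conf3) v : mb z v (z v != s0) = mu (contr z).
Proof.
by rewrite /mb; congr (mu _); apply/ffunP => u; rewrite updE !ffunE; case: eqP => // ->.
Qed.

Lemma LF_Gk (p : {ffun conf3 -> R}) v (F : conf -> R) : (forall s, 0 <= F s) -> (forall s, mu s = 0 -> F s = 0) ->
  (forall y, p y = liftP th (contr y) y * F (contr y)) ->
  forall z : conf3, step p (Gk v) z = liftP th (contr z) z *
    ((F (upd (contr z) v false) + F (upd (contr z) v true)) * mu (contr z) /
     (mu (upd (contr z) v false) + mu (upd (contr z) v true))).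
Proof.
move=> F0 Fz pE z; rewrite stepG sum3 !pE !contr_upd !liftP_upd /= -/(Cz z v).
rewrite condpiE mb_id (liftP_contr_split z v) /mb; set L := lift1 th (z v != s0) (z v); rewrite /lift1 /=; ring.
Qed.

Lemma LF_GD p : LF p -> LF (step p (K_GD th mu)).
Proof.
case=> F [F0 Fz pE].
have -> : step p (K_GD th mu) = step p (fun x z => #|V|%:R^-1 * \sum_v Gk v x z) by [].
rewrite step_avgE.
pose Fv v (s : conf) := (F (upd s v false) + F (upd s v true)) * mu s /
     (mu (upd s v false) + mu (upd s v true)).
exists (fun s => #|V|%:R^-1 * \sum_v Fv v s); split.
- move=> s; rewrite mulr_ge0 ?invr_ge0 ?ler0n // sumr_ge0 // => v _.
  by rewrite /Fv divr_ge0 ?mulr_ge0 ?addr_ge0.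
- by move=> s ms; rewrite big1 ?mulr0 // => v _; rewrite /Fv ms mulr0 mul0r.
- move=> y; rewrite [LHS]ffunE; under eq_bigr => v _ do rewrite (LF_Gk v F0 Fz pE).
  by rewrite -mulr_sumr /Fv mulrCA.
Qed.

Lemma step_CL (p : {ffun conf3 -> R}) z :
  step p (K_contr_lift th) z =
  liftP th (contr z) z * \sum_y (contr y == contr z)%:R * p y.
Proof.
rewrite [LHS]ffunE mulr_sumr; apply: eq_bigr => y _; rewrite /K_contr_lift.
have [e|ne] := eqVneq (contr y) (contr z); first by rewrite e mul1r mulrC.
rewrite mul0r mulr0 (_ : liftP th (contr y) z = 0) ?mulr0 //.
by apply/eqP; apply: contraNT ne => /liftP_neq0 ->.
Qed.

Lemma LF_CL p : LF p -> step p (K_contr_lift th) = p.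
Proof.
case=> F [F0 Fz pE]; apply/ffunP => z; rewrite step_CL pE; congr (_ * _).
transitivity (\sum_y liftP th (contr z) y * F (contr z)).
  apply: eq_bigr => y _; rewrite pE.
  have [e|ne] := eqVneq (contr y) (contr z); first by rewrite e mul1r.
  rewrite mul0r (_ : liftP th (contr z) y = 0) ?mul0r //.
  by apply/eqP; apply: contraNT ne => /liftP_neq0 ->.
by rewrite -mulr_suml sum_liftP mul1r.
Qed.

Lemma le_contr_ones (s s' : conf) : (forall v, s v ==> s' v) -> s = ones V -> s' = ones V.
Proof.
move=> H e; apply/ffunP => v; rewrite !ffunE; move: (H v); rewrite e ffunE.
by case: (s' v).
Qed.

Lemma Inv_LF (F : conf -> R) : (forall s, 0 <= F s) -> (forall s, mu s = 0 -> F s = 0) ->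
  (forall s s' : conf, (forall v, s v ==> s' v) -> F s * mu s' <= F s' * mu s) ->
  InvQ [ffun y => liftP th (contr y) y * F (contr y)].
Proof.
move=> F0 Fz Fm; split.
- by move=> y; rewrite ffunE mulr_ge0 ?liftP_ge0 // ltW.
- move=> y /eqP; rewrite pi_eq0 => /eqP e.
  by rewrite ffunE (Fz _ e) mulr0.
- move=> x y hxy.
  have E (z : conf3) : [ffun y => liftP th (contr y) y * F (contr y)] z =
    liftP th (contr z) z * F (contr z) by exact: ffunE.
  rewrite !E !piE.
  have hL := liftP_ge0 (contr x) x.
  have hL' := liftP_ge0 (contr y) y.
  have := Fm (contr x) (contr y) (fun v => le3_contr v hxy).
  set a := liftP th (contr x) x; set b := liftP th (contr y) y.
  move=> h.
  rewrite (_ : a * F (contr x) * (mu (contr y) * b) = (a * b) * (F (contr x) * mu (contr y))); last by ring.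
  rewrite (_ : b * F (contr y) * (mu (contr x) * a) = (a * b) * (F (contr y) * mu (contr x))); last by ring.
  by rewrite ler_wpM2l // mulr_ge0.
Qed.


Definition Mq (q : {ffun conf3 -> R}) (s : conf) := \sum_y (contr y == s)%:R * q y.

Lemma M_cross q : InvQ q -> forall s s' : conf, (forall v, s v ==> s' v) ->
  Mq q s * mu s' <= Mq q s' * mu s.
Proof.
case=> q0 qpi qcm s s' hss.
have M0 t : mu t = 0 -> Mq q t = 0.
  move=> mt; rewrite /Mq big1 // => y _.
  have [e|//] := eqVneq (contr y) t; last by rewrite mul0r.
  by rewrite qpi ?mulr0 //; apply/eqP; rewrite pi_eq0 e mt.
have Mge0 t : 0 <= Mq q t by rewrite /Mq sumr_ge0 // => y _; rewrite mulr_ge0.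
have [ms|ms] := eqVneq (mu s) 0; first by rewrite M0 // mul0r mulr_ge0.
have [ms'|ms'] := eqVneq (mu s') 0; first by rewrite ms' mulr0 mulr_ge0.
have ps : 0 < mu s by rewrite lt0r ms mu0.
have ps' : 0 < mu s' by rewrite lt0r ms' mu0.
pose r y := q y / pi y.
have ME t : 0 < mu t -> Mq q t = mu t * \sum_y liftP th t y * r y.
  move=> mt; rewrite /Mq mulr_sumr; apply: eq_bigr => y _.
  have [e|ne] := eqVneq (contr y) t.
    rewrite mul1r /r piE e; have := liftP_pos y; rewrite e => lp.
    by field; rewrite !lt0r_neq0.
  rewrite mul0r (_ : liftP th t y = 0) ?mul0r ?mulr0 //.
  by apply/eqP; apply: contraNT ne => /liftP_neq0 ->.
have [c [c0 cp cq cle]] := sd_lift hss.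
have E : \sum_y liftP th s y * r y <= \sum_y liftP th s' y * r y.
  have E1 : \sum_y liftP th s y * r y = \sum_y \sum_y' c (y, y') * r y.
    by apply: eq_bigr => y _; rewrite -mulr_suml cp ffunE.
  have E2 : \sum_y liftP th s' y * r y = \sum_y \sum_y' c (y', y) * r y.
    by apply: eq_bigr => y _; rewrite -mulr_suml cq ffunE.
  rewrite E1 E2 [X in _ <= X]exchange_big /=.
    apply: ler_sum => y _; apply: ler_sum => y' _.
    have [->|nc] := eqVneq (c (y, y')) 0; first by rewrite !mul0r.
    have cpos : 0 < c (y, y') by rewrite lt0r nc c0.
    have l1 : 0 < liftP th s y.
      by have := coupling_le y y' c0; rewrite cp ffunE; apply: lt_le_trans.
    have l2 : 0 < liftP th s' y'.
      by have := coupling_le' y y' c0; rewrite cq ffunE; apply: lt_le_trans.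
    have e1 : s = contr y by apply: liftP_neq0; rewrite lt0r_neq0.
    have e2 : s' = contr y' by apply: liftP_neq0; rewrite lt0r_neq0.
    have py : 0 < pi y by rewrite lt0r pi_eq0 -e1 ms pi_ge0.
    have py' : 0 < pi y' by rewrite lt0r pi_eq0 -e2 ms' pi_ge0.
    rewrite ler_wpM2l ?c0 // /r ler_pdivrMr // mulrAC ler_pdivlMr //.
    exact: qcm (cle _ _ nc).
rewrite (ME s ps) (ME s' ps') -subr_ge0.
set A := \sum_y liftP th s y * r y in E *; set B := \sum_y liftP th s' y * r y in E *.
have -> : mu s' * B * mu s - mu s * A * mu s' = mu s * mu s' * (B - A) by ring.
by rewrite !mulr_ge0 ?subr_ge0 // ltW.
Qed.

Lemma InvQ_CL q : InvQ q -> InvQ (step q (K_contr_lift th)).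
Proof.
move=> hq.
have -> : step q (K_contr_lift th) = [ffun y => liftP th (contr y) y * Mq q (contr y)].
  by apply/ffunP => z; rewrite step_CL [RHS]ffunE.
case: (hq) => q0 qpi _.
apply: Inv_LF.
- by move=> t; rewrite /Mq sumr_ge0 // => y _; rewrite mulr_ge0.
- move=> t mt; rewrite /Mq big1 // => y _.
  have [e|//] := eqVneq (contr y) t; last by rewrite mul0r.
  by rewrite qpi ?mulr0 //; apply/eqP; rewrite pi_eq0 e mt.
- exact: M_cross.
Qed.

Lemma lift_ones_E : (@law_lift_ones _ V th) =
  [ffun y => liftP th (contr y) y * (contr y == ones V)%:R].
Proof.
apply/ffunP => y; rewrite [LHS]ffunE [RHS]ffunE.
have [<-|ne] := eqVneq (contr y) (ones V); first by rewrite mulr1.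
rewrite mulr0; apply/eqP; apply: contraNT ne => /liftP_neq0 ->.
by [].
Qed.

Lemma main_ind T2 t : [/\ sd (law_GD th mu t) (law_alg th mu T2 t),
  InvQ (law_alg th mu T2 t) & LF (law_GD th mu t)].
Proof.
elim: t => [|t [IHs IHi IHl]] /=.
  have Hi : InvQ ((@law_lift_ones _ V th)).
    rewrite lift_ones_E; apply: (Inv_LF (F := fun s : conf => (s == ones V)%:R)).
    - by move=> s; rewrite ler0n.
    - move=> s ms; case: eqP => // es; move: mones; by rewrite -es ms ltxx.
    - move=> s s' hss; have [es|ne] := eqVneq s (ones V).
        by rewrite (le_contr_ones hss es) es eqxx.
      by rewrite mul0r mulr_ge0 ?ler0n.
  split => //.
  - by apply: sd_refl => y; case: Hi.
  - exists (fun s => (s == ones V)%:R); split.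
    + by move=> s; rewrite ler0n.
    + move=> s ms; case: eqP => // es; move: mones; by rewrite -es ms ltxx.
    + by move=> y; rewrite lift_ones_E ffunE.
set a := law_alg th mu T2 t in IHs IHi *; set g := law_GD th mu t in IHs IHl *.
set p := if (T2 %| t)%N then step a (K_contr_lift th) else a.
have [Sp Ip] : sd g p /\ InvQ p.
  rewrite /p; case: (T2 %| t)%N; last by [].
  split; last exact: InvQ_CL.
  rewrite -(LF_CL IHl). apply: (sd_step IHs) => x y hxy _ _.
  exact: sd_lift (fun v => le3_contr v hxy).
have gpos x : 0 < g x -> 0 < pi x.
  case: IHl => F [F0 Fz pE]; rewrite pE => gx.
  rewrite lt0r pi_ge0 andbT pi_eq0; apply: contraTN gx => /eqP e.
  by rewrite Fz // mulr0 ltxx.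
have ppos y : 0 < p y -> 0 < pi y.
  case: Ip => _ qpi _ py; rewrite lt0r pi_ge0 andbT; apply: contraTneq py => e.
  by rewrite qpi // ltxx.
split.
- apply: sd_trans (GD_alg Ip).
  apply: (sd_step Sp) => x y hxy gx py.
  exact: GD_mono hxy (gpos _ gx) (ppos _ py).
- exact: InvQ_alg.
- exact: LF_GD.
Qed.

End Main.

Unset Implicit Arguments.
Set Strict Implicit.

Theorem lemma3p3 (R : realFieldType) (V : finType)
    (mu : {ffun {ffun V -> bool} -> R}) (theta : R) (T1 T2 t : nat) :
  is_distr mu ->
  monotone_system mu ->
  0 < mu (ones V) ->
  0 < theta < 1 ->
  (1 <= T1)%N -> (1 <= T2)%N ->
  (t <= T1 * T2)%N ->
  sd (law_GD theta mu t) (law_alg theta mu T2 t).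
Proof.
move=> [mu0 _] mono mones /andP[th0 th1] _ _ _.
by case: (main_ind th0 th1 mu0 mones mono T2 t).
Qed.
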